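(* Let $\langle c^m,c^M\rangle$ be a cell of size $n$ and $i\in[n-1]$. (i) If $c^m_i<0$ then $c^M_i\leq 0$. (ii) If $c^m_i\geq 0$ then $c^M_i>0$.
   Context: A Tamari diagram of size $n$ is a word $u=u_1\cdots u_n$ of integers with $0\leq u_i\leq n-i$ and $u_{i+j}\leq u_i-j$ for all $i\in[n]$, $0\leq j\leq u_i$. A dual Tamari diagram of size $n$ is a word $v$ of integers with $0\leq v_i\leq i-1$ and $v_{i-j}\leq v_i-j$ for all $i\in[n]$, $0\leq j\leq v_i$. $(u,v)$ is a Tamari interval diagram if moreover for all $1\leq i<j\leq n$ with $j-i\leq u_i$ one has $v_j<j-i$. A cubic coordinate of size $n$ is $c\in\mathbb{Z}^{n-1}$ such that $(u,v)$ with $u_i=\max(c_i,0)$ ($i\in[n-1]$), $u_n=0$, $v_1=0$, $v_i=|\min(c_{i-1},0)|$ ($2\leq i\leq n$) is a Tamari interval diagram. For a cubic coordinate $c$ and $i\in[n-1]$, the minimal increase $\uparrow_i(c)$ is defined when there exists a cubic coordinate agreeing with $c$ outside position $i$ and with $i$-th entry $>c_i$; then $\uparrow_i(c)$ is obtained from $c$ by replacing $c_i$ by the smallest integer $t>c_i$ such that the result is a cubic coordinate. $c$ is minimal-cellular if $\uparrow_i(c)$ is defined for all $i\in[n-1]$. A cell of size $n$ is a pair $\langle c^m,c^M\rangle$ where $c^m$ is a minimal-cellular cubic coordinate of size $n$ and $c^M=\uparrow_1(\uparrow_2(\cdots(\uparrow_{n-1}(c^m))\cdots))$ (every step of this composition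 is defined). *)

(* Defs.v *)
(* Words are 1-indexed: position i of a word w is w i
   (for functions nat -> int) or nth 0 c (i-1) (for sequences). *)
From mathcomp Require Import all_boot all_order all_algebra.
Set Implicit Arguments. Unset Strict Implicit. Unset Printing Implicit Defensive.
Import Order.TTheory GRing.Theory Num.Theory.
Local Open Scope ring_scope.

Definition tamari_diagram (n : nat) (u : nat -> int) : Prop :=
  forall i : nat, (1 <= i <= n)%N ->
    0 <= u i /\ u i <= (n - i)%:Z /\
    (forall j : nat, j%:Z <= u i -> u (i + j)%N <= u i - j%:Z).

Definition dual_tamari_diagram (n : nat) (v : nat -> int) : Prop :=
  forall i : nat, (1 <= i <= n)%N ->
    0 <= v i /\ v i <= (i - 1)%:Z /\
    (forall j : nat, j%:Z <= v i -> v (i - j)%N <= v i - j%:Z).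

Definition tamari_interval_diagram (n : nat) (u v : nat -> int) : Prop :=
  tamari_diagram n u /\ dual_tamari_diagram n v /\
  forall i j : nat, (1 <= i)%N -> (i < j)%N -> (j <= n)%N ->
    (j - i)%:Z <= u i -> v j < (j - i)%:Z.

Definition cc (c : seq int) (i : nat) : int := nth 0 c i.-1.

Definition cu (n : nat) (c : seq int) (i : nat) : int :=
  if (i < n)%N then Num.max (cc c i) 0 else 0.

Definition cv (c : seq int) (i : nat) : int :=
  if (i <= 1)%N then 0 else `|Num.min (cc c i.-1) 0|.

Definition cubic_coordinate (n : nat) (c : seq int) : Prop :=
  size c = n.-1 /\ tamari_interval_diagram n (cu n c) (cv c).

Definition setc (c : seq int) (i : nat) (t : int) : seq int :=
  set_nth 0 c i.-1 t.

Definition up_defined (n i : nat) (c : seq int) : Prop :=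
  exists t : int, cc c i < t /\ cubic_coordinate n (setc c i t).

Definition min_incr (n i : nat) (c d : seq int) : Prop :=
  exists t : int, cc c i < t /\ cubic_coordinate n (setc c i t) /\
    (forall t' : int, cc c i < t' -> t' < t -> ~ cubic_coordinate n (setc c i t')) /\
    d = setc c i t.

Definition minimal_cellular (n : nat) (c : seq int) : Prop :=
  cubic_coordinate n c /\
  forall i : nat, (1 <= i <= n.-1)%N -> up_defined n i c.

(* up_comp n k c d : d = uparrow_1(uparrow_2(...uparrow_k(c)...)),
   every step being defined *)
Fixpoint up_comp (n k : nat) (c d : seq int) : Prop :=
  match k with
  | 0%N => d = c
  | k'.+1 => exists e, min_incr n k'.+1 c e /\ up_comp n k' e d
  end.

Definition is_cell (n : nat) (cm cM : seq int) : Prop :=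
  minimal_cellular n cm /\ up_comp n n.-1 cm cM.

(* Main.v *)
Require Import Defs.
From mathcomp Require Import all_boot all_order all_algebra.
From mathcomp Require Import zify.
From Stdlib Require Import FunctionalExtensionality.
Import Order.TTheory GRing.Theory Num.Theory.
Local Open Scope ring_scope.

Lemma cc_setc c i t k : cc (setc c i t) k = if k.-1 == i.-1 then t else cc c k.
Proof. by rewrite /cc /setc nth_set_nth. Qed.

Lemma upB n k : forall c d, up_comp n k c d -> forall i, (k < i)%N -> cc d i = cc c i.
Proof.
elim: k => [|k IH] c d /=; first by move=> -> .
move=> [e [[t [_ [_ [_ ->]]]] H]] i Hi.
rewrite (IH _ _ H i (ltnW Hi)) cc_setc.
have -> : (i.-1 == k.+1.-1) = false by apply/eqP; lia.
by [].
Qed.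

Lemma cu_setc n c i : cc c i < 0 -> cu n (setc c i 0) = cu n c.
Proof.
move=> Hneg; apply: functional_extensionality => k.
rewrite /cu cc_setc; case: ifP => // _; case: ifP => // /eqP Hk.
have -> : cc c k = cc c i by rewrite /cc Hk.
by rewrite maxxx; apply/esym/max_r/ltW.
Qed.

Lemma cv_setc c i k : cv (setc c i 0) k = cv c k \/ cv (setc c i 0) k = 0.
Proof.
rewrite /cv cc_setc; case: ifP => _; first by left.
case: ifP => _; last by left.
by right; rewrite minxx.
Qed.

Lemma cv_le c i k : cv (setc c i 0) k <= cv c k.
Proof.
case: (cv_setc c i k) => ->; first by [].
rewrite /cv; case: ifP => // _.
Qed.

Lemma C n c i : cubic_coordinate n c -> (1 <= i <= n.-1)%N -> cc c i < 0 ->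
  cubic_coordinate n (setc c i 0).
Proof.
move=> [Hs [Hu [Hv Hint]]] Hi Hneg; split.
  rewrite /setc size_set_nth Hs; apply/maxn_idPr; lia.
rewrite cu_setc //; split; first by [].
split.
  move=> k Hk; have [H0 [H1 H2]] := Hv k Hk.
  split; first by rewrite /cv; case: ifP.
  split; first exact: le_trans (cv_le c i k) H1.
  move=> j Hj; case: (cv_setc c i k) => Hck.
    rewrite Hck; rewrite Hck in Hj.
    exact: le_trans (cv_le c i _) (H2 j Hj).
  rewrite Hck in Hj; have Hj0 : j = 0%N by lia.
  by rewrite Hj0 subn0 Hck subr0.
move=> a b Ha Hab Hb Hle.
exact: le_lt_trans (cv_le c i b) (Hint a b Ha Hab Hb Hle).
Qed.

Lemma D n k : forall c d, (k <= n.-1)%N -> cubic_coordinate n c -> up_comp n k c d ->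
  forall i, (1 <= i <= k)%N ->
  (cc c i < 0 -> cc d i <= 0) /\ (0 <= cc c i -> 0 < cc d i).
Proof.
elim: k => [|k IH] c d Hk Hc /=; first by move=> _ i; lia.
move=> [e [[t [Ht [Hcub [Hmin He]]] H]] i Hi].
case: (ltnP i k.+1) => Hik.
  have Hce : cc e i = cc c i.
    rewrite He cc_setc; have -> : (i.-1 == k.+1.-1) = false by apply/eqP; lia.
    by [].
  rewrite -Hce; apply: (IH e d) => //; [lia | by rewrite He | lia].
have Hi' : i = k.+1 by lia.
subst i.
have -> : cc d k.+1 = t.
  by rewrite (@upB n k e d H k.+1 (ltnSn k)) He cc_setc eqxx.
split; last by move=> H0; exact: le_lt_trans H0 Ht.
move=> Hneg; rewrite leNgt; apply/negP => Ht0.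
apply: (Hmin 0 Hneg Ht0); apply: C => //; lia.
Qed.

Theorem lemma4p6 (n : nat) (cm cM : seq int) (i : nat) :
  is_cell n cm cM -> (1 <= i <= n.-1)%N ->
  (cc cm i < 0 -> cc cM i <= 0) /\ (0 <= cc cm i -> 0 < cc cM i).
Proof.
move=> [[Hc _] Hup] Hi.
exact: (@D n n.-1 cm cM (leqnn _) Hc Hup i Hi).
Qed.
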